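(* Let $R$ be a ring with unity and involution $*$, and let $a,b,c\in R$. Then $a$ is left dual $(b,c)$-core invertible if and only if $ab$ is strongly left $(b^*,c)$-invertible.
   Context: For $u,b,c\in R$, $u$ is left dual $(b,c)$-core invertible if there exists $x\in Rc$ with $bxub=b$ and $(xub)^*=xub$. $u$ is strongly left $(b,c)$-invertible if $b\in Rcub$ and $cub$ is regular (i.e. there exists $z$ with $cub\,z\,cub=cub$); equivalently there exists $x\in R$ with $xux=x$, $xR=bR$ and $Rx\subseteq Rc$. *)

(* Defs.v *)
From HB Require Import structures.
From mathcomp Require Import all_boot all_order all_algebra.
Set Implicit Arguments. Unset Strict Implicit. Unset Printing Implicit Defensive.
Import GRing.Theory.
Local Open Scope ring_scope.

Definition involution (R : pzRingType) (star : R -> R) : Prop :=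
  [/\ forall x y, star (x + y) = star x + star y,
      forall x y, star (x * y) = star y * star x
    & forall x, star (star x) = x].

Definition regular (R : pzRingType) (x : R) : Prop := exists z : R, x * z * x = x.

Definition left_dual_core_inv (R : pzRingType) (star : R -> R) (u b c : R) : Prop :=
  exists x : R, (exists r : R, x = r * c) /\
    b * x * u * b = b /\ star (x * u * b) = x * u * b.

Definition strongly_left_inv (R : pzRingType) (u b c : R) : Prop :=
  (exists r : R, b = r * (c * u * b)) /\ regular (c * u * b).

(* Main.v *)
Require Import Defs.
From mathcomp Require Import all_boot all_order all_algebra.
Local Open Scope ring_scope.
Import GRing.Theory.

Theorem theorem3p12 (R : pzRingType) (star : R -> R) (a b c : R) :
  involution star ->
  (left_dual_core_inv star a b c <-> strongly_left_inv (a * b) (star b) c).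
Proof.
case=> sD sM sK; split.
- case=> x [[r ->]] [H1 H2].
  have Hp : r * (c * (a * b)) = star b * (star a * (star c * star r)).
    by move: H2; rewrite !sM -!mulrA => ->.
  have Hb : b = b * (r * (c * (a * b))) by rewrite -{1}H1 -!mulrA.
  have Hbs : star b = r * (c * (a * b)) * star b.
    have H2' : star (r * (c * (a * b))) = r * (c * (a * b)) by rewrite !mulrA.
    by rewrite {1}Hb sM H2'.
  split.
    exists r; by rewrite {1}Hbs -!mulrA.
  exists (star a * star c * star r * r).
  rewrite -!mulrA.
  have Hb' : b * (star b * (star a * (star c * star r))) = b by rewrite -Hp -Hb.
  have E : b * (star b * (star a * (star c * (star r * (r * (c * (a * (b * star b))))))))
      = (b * (star b * (star a * (star c * star r)))) * (r * (c * (a * (b * star b)))).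
    by rewrite -!mulrA.
  rewrite E Hb'.
  have E2 : b * (r * (c * (a * (b * star b)))) = (b * (r * (c * (a * b)))) * star b.
    by rewrite -!mulrA.
  by rewrite E2 -Hb.
- case=> [[s Hs] _].
  exists (s * c); split; first by exists s.
  set q := s * c * a * b.
  have Hq : star q = q * star q.
    have Hs' : star b = s * c * a * b * star b by rewrite {1}Hs !mulrA.
    by rewrite /q !sM {1}Hs' -!mulrA.
  have Hh : star q = q by rewrite -{2}(sK q) Hq sM sK.
  split; last by [].
  have Hs' : star b = q * star b by rewrite {1}Hs /q !mulrA.
  have Hb : b = b * q by rewrite -{1}(sK b) Hs' sM sK Hh.
  by rewrite [RHS]Hb /q !mulrA.
Qed.
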